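(* Let $\mathcal{G}=(V,E_1,\dots,E_T)$ be a public transport graph on $n=|V|$ vertices composed of the routes $\mathcal{W}_1,\dots,\mathcal{W}_m$, such that the underlying graph $U(\mathcal{G})$ is connected. Then there exists an exploration of $\mathcal{G}$ of length at most $(2n-3)\max_{i\in[1,m]}L_i$, where $L_i=|\mathcal{W}_i|$.
   Context: A temporal graph $\mathcal{G}=(V,E_1,\dots,E_T)$ consists of a finite vertex set $V$ and an ordered sequence of edge sets $E_1,\dots,E_T$ on $V$ (timesteps); $T$ is the lifetime; an edge $e$ is active at timestep $t$ if $e\in E_t$; the underlying graph is $U(\mathcal{G})=(V,\bigcup_t E_t)$. A temporal walk is a sequence $((v_{i_1},v_{i_2}),t_1),\dots,((v_{i_{m-1}},v_{i_m}),t_{m-1})$ such that the edges form a walk (end point of each edge is the start point of the next), with $t_1<\dots<t_{m-1}$; its length is $t_{m-1}$ (the timestep of its last step). In a temporal graph, a temporal walk additionally requires each edge $(v_{i_j},v_{i_{j+1}})$ to be active at timestep $t_j$; it explores $\mathcal{G}$ if every vertex of $V$ belongs to some edge of the walk. A public transport graph with lifetime $T$ is defined by a set of temporal walks (routes) $\mathcal{W}_1,\dots,\mathcal{W}_m$ over a common vertex set $V$: writing the $j$-th step of $\mathcal{W}_i$ as $(\mathcal{W}_i[j],\mathcal{T}_i[j])$ and $L_i=|\mathcal{W}_i|$ (the last timestep of $\mathcal{W}_i$), for each $t\in[1,T]$ an edge $e$ belongs to $E_t$ iff there exist $i\in[1,m]$ and $j$ with $e=\mathcal{W}_i[j]$ and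 $\mathcal{T}_i[j]=t \bmod L_i$. (Routes are repeated periodically.) *)

(* Defs.v *)
From mathcomp Require Import all_boot.
From Stdlib Require Import Relations.
Set Implicit Arguments. Unset Strict Implicit. Unset Printing Implicit Defensive.

Definition step (V : Type) := ((V * V) * nat)%type.
Definition src {V : Type} (x : step V) : V := x.1.1.
Definition dst {V : Type} (x : step V) : V := x.1.2.
Definition time {V : Type} (x : step V) : nat := x.2.

Definition next_step {V : eqType} (x y : step V) : bool :=
  (dst x == src y) && (time x < time y).

(* A temporal walk (ignoring activity of edges): nonempty, timesteps >= 1,
   consecutive edges form a walk, strictly increasing timesteps. *)
Definition is_temporal_walk {V : eqType} (s : seq (step V)) : bool :=
  [&& s != [::], all (fun x => 0 < time x) s & sorted next_step s].

Definition walk_length {V : Type} (s : seq (step V)) : nat :=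
  last 0 (map time s).

Definition step_edge {V : eqType} (x : step V) (u v : V) : bool :=
  ((src x == u) && (dst x == v)) || ((src x == v) && (dst x == u)).

(* Public transport graph with routes W : 'I_m -> seq (step V):
   edge {u,v} is in E_t iff some step j of some route W_i has edge {u,v}
   and T_i[j] = t (mod L_i), where L_i = walk_length (W i).
   The routes repeat periodically, so E_t is defined for every t >= 1. *)
Definition pt_active {V : eqType} {m : nat} (W : 'I_m -> seq (step V))
  (t : nat) (u v : V) : Prop :=
  exists i : 'I_m, exists2 x, x \in W i &
    step_edge x u v /\ time x %% walk_length (W i) = t %% walk_length (W i).

Definition pt_temporal_walk {V : eqType} {m : nat} (W : 'I_m -> seq (step V))
  (s : seq (step V)) : Prop :=
  is_temporal_walk s /\ forall x, x \in s -> pt_active W (time x) (src x) (dst x).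

Definition explores_all {V : finType} (s : seq (step V)) : Prop :=
  forall v : V, exists2 x, x \in s & (src x == v) || (dst x == v).

Definition underlying_edge {V : eqType} {m : nat} (W : 'I_m -> seq (step V))
  (u v : V) : Prop := exists t, 0 < t /\ pt_active W t u v.

Definition underlying_connected {V : eqType} {m : nat}
  (W : 'I_m -> seq (step V)) : Prop :=
  forall u v : V, clos_refl_trans V (underlying_edge W) u v.

(* Main.v *)
Require Import Defs.
From mathcomp Require Import all_boot.
From mathcomp Require Import zify.
From Stdlib Require Import Relations.

Section Proof.
Variables (V : finType) (m : nat) (W : 'I_m -> seq (step V)).
Hypothesis hW : forall i : 'I_m, is_temporal_walk (W i).

Definition Mx := \max_(i < m) walk_length (W i).

Lemma wl_pos {s : seq (step V)} : is_temporal_walk s -> 0 < walk_length s.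
Proof.
case/and3P; case/lastP: s => [//|s y] _.
by rewrite /walk_length map_rcons last_rcons all_rcons => /andP[].
Qed.

Lemma window (a : nat) u v : underlying_edge W u v ->
  exists t, [/\ a < t, t <= a + Mx & pt_active W t u v].
Proof.
move=> [t0 [_ [i [x hx [he _]]]]].
have L0 : 0 < walk_length (W i) := wl_pos (hW i : is_temporal_walk (W i)).
have LM : walk_length (W i) <= Mx by rewrite /Mx; exact: (@leq_bigmax _ (fun j : 'I_m => walk_length (W j)) i).
move: L0 LM; set L := walk_length (W i) => L0 LM.
have hr : a.+1 %% L < L := ltn_pmod _ L0.
have hc : time x %% L < L := ltn_pmod _ L0.
have hc' : (time x %% L + L - a.+1 %% L) %% L < L := ltn_pmod _ L0.
exists (a.+1 + (time x %% L + L - a.+1 %% L) %% L).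
split; [lia | lia | ].
exists i; exists x => //; split => //.
rewrite modnDmr.
have -> : a.+1 + (time x %% L + L - a.+1 %% L) = time x %% L + (a.+1 %/ L).+1 * L.
  have := divn_eq a.+1 L.
  move: (a.+1 %/ L) (a.+1 %% L) (time x %% L) hr hc => q r c hr hc.
  rewrite mulSn. lia.
by rewrite addnC modnMDl modn_mod.
Qed.

Lemma edge_sym u v : underlying_edge W u v -> underlying_edge W v u.
Proof.
move=> [t [ht [i [x hx [he hm]]]]]; exists t; split=> //; exists i; exists x => //.
by split=> //; move: he; rewrite /step_edge orbC.
Qed.

Fixpoint upath (x : V) (p : seq V) : Prop :=
  match p with [::] => True | y :: p' => underlying_edge W x y /\ upath y p' end.

Lemma upath_cat x p1 p2 : upath x (p1 ++ p2) <-> upath x p1 /\ upath (last x p1) p2.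
Proof.
elim: p1 x => [|y p1 IH] x /=; first by split=> // [[]].
rewrite IH; tauto.
Qed.

Lemma partB (p : seq V) : forall r a, upath r p -> p != [::] ->
  exists y s, [/\ src y = r, all (fun z => a < time z) (y :: s), sorted next_step (y :: s),
    walk_length (y :: s) <= a + size p * Mx &
    (forall z, z \in y :: s -> pt_active W (time z) (src z) (dst z))] /\
    (forall v, v \in r :: p -> exists2 z, z \in y :: s & (src z == v) || (dst z == v)).
Proof.
elim: p => [//|v p IH] r a [huv hp] _.
have [t [hat hta hact]] := window a r v huv.
case: p IH hp => [|v' p'] IH hp.
  exists ((r, v), t), [::]; split; first split => //=.
  - by rewrite andbT.
  - by rewrite /walk_length /=; lia.
  - by move=> z; rewrite inE => /eqP ->.
  move=> w; rewrite !inE => /orP[] /eqP ->; exists ((r, v), t);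
    rewrite ?inE ?eqxx ?orbT //.
have [y [s [[hy hall hsort hwl hact'] hcov]]] := IH v (a + Mx) hp isT.
move: (hall) => /= /andP[hy' _].
exists ((r, v), t), (y :: s); split; first split => //.
- rewrite /= hat; apply: sub_all hall => z /=; lia.
- by rewrite /= /next_step /= hy eqxx /=; apply/andP; split; [lia|].
- move: hwl; rewrite /walk_length /= !mulSn; lia.
- move=> z; rewrite inE => /orP[/eqP -> //|]; exact: hact'.
move=> w; rewrite inE => /orP[/eqP ->|hw].
  by exists ((r, v), t); rewrite ?inE ?eqxx.
have [z hz hz'] := hcov w hw.
by exists z => //; rewrite inE hz orbT.
Qed.

Lemma notfull (A : {set V}) : #|A| < #|V| -> exists v, v \notin A.
Proof.
move=> h; case: (boolP [forall v, v \in A]) => [/forallP hA|].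
  have : A = setT by apply/setP => v; rewrite inE hA.
  by move=> e; rewrite e cardsT ltnn in h.
by rewrite negb_forall => /existsP.
Qed.

Lemma cross (S : {set V}) x y : clos_refl_trans V (underlying_edge W) x y ->
  x \in S -> y \notin S -> exists u w, [/\ u \in S, w \notin S & underlying_edge W u w].
Proof.
move=> h; have {h} := clos_rt_rt1n _ _ _ _ h; elim => [z|x0 z y0 hxz _ IH] hx hy.
  by rewrite hx in hy.
case: (boolP (z \in S)) => hz; first exact: IH.
by exists x0, z.
Qed.

Hypothesis hconn : underlying_connected W.

Lemma grow r k : exists p, [/\ upath r p, last r p = r, size p <= 2 * k &
   minn k.+1 #|V| <= #|[set v | v \in r :: p]|].
Proof.
elim: k => [|k [p [hp hl hs hc]]].
  exists [::]; split => //.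
  have -> : [set v | v \in [:: r]] = [set r] by apply/setP => v; rewrite !inE.
  by rewrite cards1 geq_minl.
case: (leqP (minn k.+2 #|V|) #|[set v | v \in r :: p]|) => hc2.
  by exists p; split => //; lia.
have [w hw] : exists w, w \notin [set v | v \in r :: p] by apply: notfull; lia.
have hr : r \in [set v | v \in r :: p] by rewrite inE mem_head.
have [u [w' [hu hw' huw]]] := cross _ _ _ (hconn r w) hr hw.
move: (hu); rewrite inE => hu'.
case/splitPl: hu' hp hl hs hc hc2 hu hw' => p1 p2 hlast hp hl hs hc hc2 hu hw'.
exists (p1 ++ w' :: u :: p2); split.
- move/upath_cat: hp => [h1 h2]; apply/upath_cat; split => //.
  by rewrite hlast /=; rewrite hlast in h2; split => //; split => //; exact: (edge_sym _ _ huw).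
- by move: hl; rewrite !last_cat hlast.
- by move: hs; rewrite !size_cat /=; lia.
have sub : w' |: [set v | v \in r :: p1 ++ p2] \subset [set v | v \in r :: p1 ++ w' :: u :: p2].
  apply/subsetP => z; rewrite !inE !mem_cat !inE.
  by case/orP => [->|/orP[->|/orP[->|->]]]; rewrite ?orbT.
have := subset_leq_card sub; rewrite cardsU1 hw'.
lia.
Qed.

End Proof.

Theorem theorem12 (V : finType) (m : nat) (W : 'I_m -> seq (step V)) :
  2 <= #|V| ->
  (forall i : 'I_m, is_temporal_walk (W i)) ->
  underlying_connected W ->
  exists s : seq (step V),
    [/\ pt_temporal_walk W s, explores_all s &
        walk_length s <= (2 * #|V| - 3) * \max_(i < m) walk_length (W i)].
Proof.
move=> hn hW hconn.
have [r _] : exists r : V, r \in V by apply/card_gt0P; exact: ltnW hn.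
have [p [hp hl hs hc]] := grow _ _ _ hconn r (#|V|.-1).
have full : forall v, v \in r :: p.
  move=> v; case: (boolP (v \in r :: p)) => // hv.
  have [] : exists v, v \notin [set v | v \in r :: p] by exists v; rewrite inE.
  move=> _ _.
  have : [set v | v \in r :: p] = setT.
    apply/eqP; rewrite eqEcard subsetT cardsT; lia.
  by move/setP/(_ v); rewrite !inE; move: hv; rewrite !inE => /negbTE ->.
have [v hv] : exists v, v \notin [set r].
  apply: notfull; rewrite cards1; lia.
case/lastP: p hp hl hs hc full => [|p' z] hp hl hs hc full.
  by move: (full v) hv; rewrite !inE => ->.
rewrite last_rcons in hl; subst z.
move: hp; rewrite -cats1 => /upath_cat [hp' _].
have full' : forall w, w \in r :: p'.
  move=> w; move: (full w); rewrite !inE mem_rcons !inE.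
  by case/orP => [->|/orP[->|->]]; rewrite ?orbT.
have hp'0 : p' != [::].
  by apply/negP => /eqP e; move: (full' v) hv; rewrite e !inE => ->.
have [y [s [[hy hall hsort hwl hact] hcov]]] := partB _ _ _ hW _ _ 0 hp' hp'0.
exists (y :: s); split.
- split => //; by rewrite /is_temporal_walk hall hsort.
- move=> w; exact: hcov.
- apply: leq_trans hwl _; rewrite add0n leq_mul2r; apply/orP; right.
  move: hs; rewrite size_rcons; lia.
Qed.
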